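(* Let $\mathcal{S}$ be a state space, let $\mathcal{A}\subset\mathbb{R}^d$ be an action space of finite positive Lebesgue measure, let $R:\mathcal{S}\times\mathcal{A}\to\mathbb{R}$ be a reward function, let $\tau(\cdot\mid s,a)$ be a transition kernel, and let $\gamma\in(0,1)$ and $\tilde{\alpha}>0$. Let $\mathcal{Q}$ be a probability distribution over (measurable) functions $Q:\mathcal{S}\times\mathcal{A}\to\mathbb{R}$ such that for every state-action pair $(s,a)$ the random variable $Q(s,a)$, $Q\sim\mathcal{Q}$, has bounded support and is sub-Gaussian with mean $\mu(s,a)$ and variance proxy $\sigma^2(s,a)$. Define the (one-step distributional soft) Bellman optimality backup, for a given next state $s'\sim\tau(\cdot\mid s,a)$, by $$\mathcal{T}^{*}Q(s,a)=R(s,a)+\gamma\,\mathbb{E}_{Q\sim\mathcal{Q}}\Big[\tilde{\alpha}\log\Big(\int_{\mathcal{A}}\exp\big(\tilde{\alpha}^{-1}Q(s',a')\big)\,da'\Big)\Big].$$ Then for every $(s,a)$ and every next state $s'$, $$\mathcal{T}^{*}Q(s,a)\le R(s,a)+\gamma\,\tilde{\alpha}\log\Big(\int_{\mathcal{A}}\exp\Big(\tilde{\alpha}^{-1}\mu(s',a')+\tfrac12\tilde{\alpha}^{-2}\sigma^2(s',a')\Big)\,da'\Big).$$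
   Context: A real random variable $X$ with mean $\mu=\mathbb{E}[X]$ is called sub-Gaussian with variance proxy $\sigma^2$ if $\mathbb{E}[\exp(\lambda X)]\le\exp(\lambda\mu+\tfrac12\lambda^2\sigma^2)$ for all $\lambda\in\mathbb{R}$. The functions $\mu(s,a)=\mathbb{E}_{Q\sim\mathcal{Q}}[Q(s,a)]$ and $\sigma^2(s,a)$ are assumed measurable in $a$. *)

(* Defs.v *)
From HB Require Import structures.
From mathcomp Require Import all_boot all_order all_algebra.
From mathcomp Require Import all_classical all_reals all_analysis.
Set Implicit Arguments. Unset Strict Implicit. Unset Printing Implicit Defensive.
Import Order.TTheory GRing.Theory Num.Theory.
Local Open Scope classical_set_scope.
Local Open Scope ring_scope.
Local Open Scope ereal_scope.

Definition sub_gaussian {d} {Omega : measurableType d} {R : realType}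
  (P : probability Omega R) (X : Omega -> R) (mu s2 : R) : Prop :=
  \int[P]_w (X w)%:E = mu%:E /\
  forall l : R, \int[P]_w expeR ((l * X w)%:E)
                <= expeR ((l * mu + 2^-1 * l ^+ 2 * s2)%:E).

Definition bounded_support {d} {Omega : measurableType d} {R : realType}
  (P : probability Omega R) (X : Omega -> R) : Prop :=
  exists M : R, {ae P, forall w, (`|X w| <= M)%R}.

Definition soft_backup {d1 d2} {Omega : measurableType d1}
  {X : measurableType d2} {R : realType} {S : Type}
  (P : probability Omega R) (lam : {measure set X -> \bar R}) (A : set X)
  (Rw : S -> X -> R) (gamma alpha : R) (Q : Omega -> S -> X -> R)
  (s : S) (a : X) (s' : S) : \bar R :=
  (Rw s a)%:E + gamma%:E *
    \int[P]_w (alpha%:E *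
       lne (\int[lam]_(a' in A) expeR ((alpha^-1 * Q w s' a')%:E))).

(* Main.v *)
Require Import Defs.
From HB Require Import structures.
From mathcomp Require Import all_boot all_order all_algebra.
From mathcomp Require Import all_classical all_reals all_analysis.
From mathcomp Require Import measurable_realfun.
From mathcomp Require Import lra.
Import Order.TTheory GRing.Theory Num.Theory.
Local Open Scope classical_set_scope.
Local Open Scope ring_scope.
Local Open Scope ereal_scope.

Lemma le_integral_any d (T : measurableType d) (R : realType)
  (mu : {measure set T -> \bar R}) (D : set T) (f g : T -> \bar R) :
  (forall x, D x -> f x <= g x) ->
  \int[mu]_(x in D) f x <= \int[mu]_(x in D) g x.
Proof.
move=> fg.
have fgD x : (f \_ D) x <= (g \_ D) x.
  rewrite /patch; case: ifPn => // /set_mem; exact: fg.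
rewrite /integral /=; apply: leeB.
- apply: le_ereal_sup => _ /= [h hf <-]; exists h => //= x.
  apply: le_trans (hf x) _. 
  exact: (@funepos_le _ _ setT _ _ (fun y _ => fgD y) x (in_setT x)).
- apply: le_ereal_sup => _ /= [h hf <-]; exists h => //= x.
  apply: le_trans (hf x) _. 
  exact: (@funeneg_le _ _ setT _ _ (fun y _ => fgD y) x (in_setT x)).
Qed.

Theorem theorem1 (R : realType) (d1 d2 : measure_display)
  (Omega : measurableType d1) (P : probability Omega R)
  (X : measurableType d2) (lam : {measure set X -> \bar R}) (A : set X)
  (S : Type) (Rw : S -> X -> R) (gamma alpha : R)
  (Q : Omega -> S -> X -> R) (mu sigma2 : S -> X -> R) :
  measurable A -> 0 < lam A < +oo ->
  (0 < gamma < 1)%R -> (0 < alpha)%R ->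
  (forall s, measurable_fun (setT `*` A) (fun p : Omega * X => Q p.1 s p.2)) ->
  (forall s a, A a -> bounded_support P (fun w => Q w s a)) ->
  (forall s a, A a -> sub_gaussian P (fun w => Q w s a) (mu s a) (sigma2 s a)) ->
  (forall s, measurable_fun A (mu s)) ->
  (forall s, measurable_fun A (sigma2 s)) ->
  forall (s : S) (a : X) (s' : S), A a ->
  soft_backup P lam A Rw gamma alpha Q s a s'
  <= (Rw s a)%:E + gamma%:E * (alpha%:E *
       lne (\int[lam]_(a' in A)
              expeR ((alpha^-1 * mu s' a' + 2^-1 * alpha^-2 * sigma2 s' a')%:E))).
Proof.
move=> mA /andP[lamA0 lamAoo] /andP[g0 g1] a0 mQ _ hsg mmu msig s a s' _.
rewrite /soft_backup; apply: leeD2l; apply: lee_wpmul2l; first by rewrite lee_fin ltW.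
pose b := fun a' => expeR ((alpha^-1 * mu s' a' + 2^-1 * alpha^-2 * sigma2 s' a')%:E).
pose J := \int[lam]_(a' in A) b a'.
pose Z := fun w => \int[lam]_(a' in A) expeR ((alpha^-1 * Q w s' a')%:E).
change (\int[P]_w (alpha%:E * lne (Z w)) <= alpha%:E * lne J).
pose lamA := mfrestr mA lamAoo.
pose f : Omega * X -> \bar R := (fun p : Omega * X => (expR (alpha^-1 * Q p.1 s' p.2))%:E) \_ (setT `*` A).
have mf : measurable_fun [set: Omega * X] f.
  apply/(measurable_restrictT _ _).1; first exact: measurableX.
  apply/measurable_EFinP; apply: measurableT_comp => //.
  apply: measurable_funM => //; exact: mQ.
have f0 p : 0 <= f p by rewrite /f /patch; case: ifP => // _; rewrite lee_fin expR_ge0.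
have fE w a' : f (w, a') = if a' \in A then expeR ((alpha^-1 * Q w s' a')%:E) else 0.
  by rewrite /f /patch in_setX in_setT.
have lamAE (g : X -> \bar R) : \int[lam]_(a' in A) g a' = \int[lamA]_a' (g \_ A) a'.
  rewrite -integral_mkcond (@eq_measure_integral _ _ _ A lamA lam) // => B mB BA.
  by rewrite /lamA /= /mfrestr /mrestr /= setIidl.
have ZE w : Z w = \int[lamA]_a' f (w, a').
  rewrite /Z lamAE; apply: eq_integral => a' _; rewrite fE /patch; by case: ifP.
have mZ : measurable_fun setT Z.
  have -> : Z = fubini_F lamA f by apply/funext => w; rewrite ZE.
  exact: measurable_fun_fubini_tonelli_F.
have Z0 w : 0 <= Z w by apply: integral_ge0 => x _; rewrite /= lee_fin expR_ge0.
have EZ : \int[P]_w Z w <= J.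
  under eq_integral do rewrite ZE.
  rewrite (fubini_tonelli f mf f0) /J lamAE.
  apply: le_integral_any => a' _.
  rewrite /patch; case: ifPn => Aa'.
  - under eq_integral do rewrite fE Aa'.
    have := (hsg s' a' (set_mem Aa')).2 alpha^-1%R.
    by rewrite /b exprVn.
  - under eq_integral do rewrite fE (negbTE Aa').
    by rewrite integral0.
have J0 : 0 <= J by apply: integral_ge0 => x _; rewrite /b lee_fin expR_ge0.
have [Jy|Jny] := eqVneq J +oo.
  by rewrite Jy /= gt0_muley ?lte_fin // leey.
have mb : measurable_fun A b.
  apply/measurable_EFinP; apply: measurableT_comp => //.
  apply: measurable_funD; apply: measurable_funM => //; exact: measurable_cst.
have Jpos : 0 < J.
  rewrite lt_neqAle J0 andbT; apply/negP => /eqP J0'.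
  have := (ae_eq_integral_abs lam mA mb).1.
  have -> : \int[lam]_(x in A) `|b x| = J.
    by apply: eq_integral => x _; rewrite gee0_abs // /b lee_fin expR_ge0.
  move=> /(_ (esym J0')) [N [mN N0 sub]].
  have AN : A `<=` N.
    move=> x Ax; apply: sub => /= /(_ Ax) /eqP.
    by rewrite /b /= eqe gt_eqF // expR_gt0.
  have := le_measure lam (mem_set mA) (mem_set mN) AN.
  move=> h; have := lt_le_trans lamA0 h; move: N0; rewrite /= => ->; by rewrite ltxx.
have Jfin : J \is a fin_num by rewrite ge0_fin_numE // ltey.
pose j := fine J.
have Jj : J = j%:E by rewrite fineK.
have j0 : (0 < j)%R by rewrite -lte_fin -Jj.
rewrite Jj lne_EFin //.
have pt w : alpha%:E * lne (Z w) <= (alpha * (ln j - 1))%:E + (alpha / j)%:E * Z w.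
  move: (Z0 w); case: (Z w) => [z| |] z0 //.
  - have [->|zpos] := eqVneq z 0%R.
      by rewrite le0_lneNy // gt0_muleNy ?lte_fin // leNye.
    have zp : (0 < z)%R by rewrite lt_neqAle eq_sym zpos -lee_fin.
    rewrite lne_EFin // -!EFinM -EFinD lee_fin.
    have h1 := expR_ge1Dx (ln (z / j)).
    rewrite lnK ?posrE ?divr_gt0 // lnM ?posrE ?invr_gt0 // lnV ?posrE // in h1.
    have h2 : (ln z <= ln j - 1 + z / j)%R by lra.
    rewrite -mulrA -mulrDr ler_wpM2l ?(ltW a0) //.
    by rewrite mulrC.
  - by rewrite /= !gt0_muley ?lte_fin ?divr_gt0 //.
apply: le_trans (@le_integral_any _ _ _ P setT _ _ (fun w _ => pt w)) _.
have Zint : P.-integrable setT Z.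
  apply/integrableP; split => //.
  under eq_integral do rewrite gee0_abs //.
  by apply: le_lt_trans EZ _; rewrite Jj ltey.
rewrite integralD //; last 2 first.
  exact: finite_measure_integrable_cst.
  exact: integrableZl.
rewrite integral_cst // [X in _ * X](_ : _ = 1); last exact: probability_setT.
rewrite mule1 integralZl //.
apply: le_trans (leeD2l _ (lee_wpmul2l _ EZ)) _.
  by rewrite lee_fin ltW // divr_gt0.
rewrite Jj -!EFinM -EFinD lee_fin.
by rewrite divfK ?gt_eqF // mulrBr mulr1 subrK.
Qed.
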